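(* Let $v\ge 2$ and let $(X,\mathcal{A})$ be a $(v,2,1)$-BIBD, i.e. $|X|=v$ and $\mathcal{A}$ is the set of all $2$-subsets of $X$. If $\phi:\mathcal{A}\to Y$ is a weak nesting of $(X,\mathcal{A})$ into a partial $(w,3,2)$-BIBD, where $X\subseteq Y$ and $|Y|=w$, then $w\ge (5v-1)/4$.
   Context: A $(v,k,\lambda)$-BIBD is a pair $(X,\mathcal{A})$ where $X$ is a set of $v$ points and $\mathcal{A}$ is a multiset of $k$-subsets of $X$ (blocks) such that every pair of distinct points lies in exactly $\lambda$ blocks. A partial $(w,k,\lambda)$-BIBD is defined in the same way on $w$ points, except that every pair of distinct points lies in at most $\lambda$ blocks. Given a $(v,k,\lambda)$-BIBD $(X,\mathcal{A})$ and a set $Y\supseteq X$ with $|Y|=w$, a map $\phi:\mathcal{A}\to Y$ is a weak nesting if $\phi(A)\notin A$ for every block $A$ and the multiset of augmented blocks $\{A\cup\{\phi(A)\}:A\in\mathcal{A}\}$ (one for each block of $\mathcal{A}$, with multiplicity) is a partial $(w,k+1,\lambda+1)$-BIBD on point set $Y$. *)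

(* Defs.v *)
From mathcomp Require Import all_boot.
Set Implicit Arguments. Unset Strict Implicit. Unset Printing Implicit Defensive.

(* Points live in an ambient finite type T; point sets are {set T};
   a block multiset is a sequence of blocks (multiplicity = number of occurrences). *)

Definition is_BIBD (T : finType) (X : {set T}) (k lam : nat) (B : seq {set T}) : Prop :=
  (forall A, A \in B -> A \subset X /\ #|A| = k) /\
  (forall x y, x \in X -> y \in X -> x != y ->
     count (fun A : {set T} => (x \in A) && (y \in A)) B = lam).

Definition is_partial_BIBD (T : finType) (Y : {set T}) (k lam : nat) (B : seq {set T}) : Prop :=
  (forall A, A \in B -> A \subset Y /\ #|A| = k) /\
  (forall x y, x \in Y -> y \in Y -> x != y ->
     count (fun A : {set T} => (x \in A) && (y \in A)) B <= lam).

Definition weak_nesting (T : finType) (X Y : {set T}) (k lam : nat)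
    (B : seq {set T}) (phi : {set T} -> T) : Prop :=
  X \subset Y /\
  (forall A, A \in B -> phi A \in Y /\ phi A \notin A) /\
  is_partial_BIBD Y k.+1 lam.+1 [seq phi A |: A | A <- B].

(* Main.v *)
Require Import Defs.
From mathcomp Require Import all_boot.
From mathcomp Require Import zify.

Section H.
Variable T : finType.

Lemma count_sum (P : pred {set T}) (s : seq {set T}) :
  count P s = \sum_(a <- s) (P a : nat).
Proof. by rewrite -sum1_count big_mkcond. Qed.

Lemma exch2 (S1 S2 : {set T}) (Q : T -> T -> {set T} -> bool) (B : seq {set T}) :
  \sum_(x in S1) \sum_(y in S2) count (Q x y) B =
  \sum_(A <- B) \sum_(x in S1) \sum_(y in S2) (Q x y A : nat).
Proof.
under eq_bigr do under eq_bigr do rewrite count_sum.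
under eq_bigr do rewrite exchange_big.
by rewrite exchange_big.
Qed.

Lemma L1 (S : {set T}) (b : pred T) :
  \sum_(y in S) (b y : nat) = #|[set y in S | b y]|.
Proof.
rewrite -sum1_card [RHS]big_mkcond [LHS]big_mkcond /=.
apply: eq_bigr => y _; rewrite in_set; by case: (y \in S); case: (b y).
Qed.

End H.

Section H.
Variable T : finType.

Lemma sum_eq1 (S : {set T}) (a : T) : \sum_(x in S) ((a == x) : nat) = (a \in S).
Proof.
rewrite L1; case: (boolP (a \in S)) => h.
  suff -> : [set x in S | a == x] = [set a] by rewrite cards1.
  apply/setP => x; rewrite !inE; case: eqP => [<-|/eqP ne]; first by rewrite h eqxx.
  by rewrite eq_sym (negbTE ne) andbF.
suff -> : [set x in S | a == x] = set0 by rewrite cards0.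
by apply/setP => x; rewrite !inE; case: eqP => [<-|]; rewrite ?(negbTE h) ?andbF.
Qed.

Lemma blk_a (X A : {set T}) : A \subset X -> #|A| = 2 ->
  \sum_(x in X) \sum_(y in X) (((x != y) && (x \in A) && (y \in A)) : nat) = 2.
Proof.
move=> AX cA.
transitivity (\sum_(x in X) ((x \in A) : nat)); last first.
  rewrite L1 -cA; apply: eq_card => x; rewrite !inE.
  by case xA: (x \in A); rewrite ?andbT ?andbF // (subsetP AX).
apply: eq_bigr => x _; rewrite L1.
case: (boolP (x \in A)) => xA.
  suff -> : [set y in X | (x != y) && true && (y \in A)] = A :\ x.
    by move: (cardsD1 x A); rewrite xA cA /=; case.
  apply/setP => y; rewrite !inE andbT.
  rewrite eq_sym.
  by case yA: (y \in A); rewrite ?andbF // (subsetP AX) ?andbT.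
suff -> : [set y in X | (x != y) && false && (y \in A)] = set0 by rewrite cards0.
by apply/setP => y; rewrite !inE !andbF.
Qed.

Lemma blk_b (X A : {set T}) (z : T) : A \subset X -> #|A| = 2 -> z \notin A ->
  \sum_(x in X) \sum_(y in X) (((x != y) && (z == x) && (y \in A)) : nat) = 2 * (z \in X).
Proof.
move=> AX cA zA.
rewrite -sum_eq1 big_distrr /=.
apply: eq_bigr => x _; rewrite L1.
case: (boolP (z == x)) => /= zx.
  suff -> : [set y in X | (x != y) && true && (y \in A)] = A by rewrite cA.
  apply/setP => y; rewrite !inE andbT.
  case yA: (y \in A); rewrite ?andbF // (subsetP AX) //=.
  move/eqP: zx => <-; rewrite andbT; apply/negP => /eqP e; move: zA; by rewrite e yA.
suff -> : [set y in X | (x != y) && false && (y \in A)] = set0 by rewrite cards0.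
by apply/setP => y; rewrite !inE !andbF.
Qed.

Lemma blk_c (X A P : {set T}) (z : T) : A \subset X -> #|A| = 2 ->
  \sum_(p in P) \sum_(x in X) (((z == p) && (x \in A)) : nat) = 2 * (z \in P).
Proof.
move=> AX cA.
rewrite -sum_eq1 big_distrr /=.
apply: eq_bigr => p _; rewrite L1.
case: (z == p) => /=.
  suff -> : [set x in X | x \in A] = A by rewrite cA.
  apply/setP => y; rewrite !inE.
  by case yA: (y \in A); rewrite ?andbF // (subsetP AX).
suff -> : [set x in X | false] = set0 by rewrite cards0.
by apply/setP => y; rewrite !inE !andbF.
Qed.

Lemma sum_neq (X : {set T}) :
  \sum_(x in X) \sum_(y in X) ((x != y) : nat) = #|X| * (#|X| - 1).
Proof.
rewrite -sum_nat_const; apply: eq_bigr => x xX; rewrite L1.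
suff -> : [set y in X | x != y] = X :\ x by move: (cardsD1 x X); rewrite xX; lia.
by apply/setP => y; rewrite !inE eq_sym andbC.
Qed.

End H.

Lemma bool_aux (a b c d : bool) : (c -> ~~a) -> (d -> ~~b) -> (c -> ~~ d) ->
  (a && b) + ((c && b) + (d && a)) <= (c || a) && (d || b).
Proof.
by case: a; case: b; case: c; case: d => //= h1 h2 h3;
  first [ by move: (h1 isT) | by move: (h2 isT) | by move: (h3 isT) ].
Qed.

Theorem lemma2p1 (T : finType) (X Y : {set T}) (B : seq {set T})
    (phi : {set T} -> T) :
  2 <= #|X| ->
  is_BIBD X 2 1 B ->
  X \subset Y ->
  weak_nesting X Y 2 1 B phi ->
  5 * #|X| - 1 <= 4 * #|Y|.
Proof.
move=> v2 [BA Bcnt] XY [_ [phiY [_ tripcnt]]].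
have XYs := subsetP XY.
set F := \sum_(A <- B) ((phi A \in X) : nat).
set G := \sum_(A <- B) ((phi A \in Y :\: X) : nat).
have FG : F + G = size B.
  rewrite /F /G -big_split /= -sum1_size big_seq [RHS]big_seq.
  apply: eq_bigr => A AB; have [pY _] := phiY A AB.
  by rewrite in_setD; case: (phi A \in X) => //=; rewrite pY.
have H2n : 2 * size B = #|X| * (#|X| - 1).
  rewrite -sum_neq.
  transitivity (\sum_(x in X) \sum_(y in X)
     count (fun A : {set T} => (x != y) && (x \in A) && (y \in A)) B).
    rewrite exch2 -sum1_size big_distrr /= big_seq [RHS]big_seq.
    apply: eq_bigr => A AB; have [AX cA] := BA A AB; by rewrite blk_a.
  apply: eq_bigr => x xX; apply: eq_bigr => y yX.
  case: (eqVneq x y) => [<-|xy] /=.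
    by rewrite (@eq_count _ _ pred0) ?count_pred0 // => A; rewrite eqxx.
  rewrite -(Bcnt x y xX yX xy); apply: eq_count => A /=; done.
have HF : 4 * F <= #|X| * (#|X| - 1).
  set c := fun x y => count (fun A : {set T} => (x != y) && (phi A == x) && (y \in A)) B.
  have Sb : \sum_(x in X) \sum_(y in X) c x y = 2 * F.
    rewrite /c exch2 /F big_distrr /= big_seq [RHS]big_seq.
    apply: eq_bigr => A AB; have [AX cA] := BA A AB; have [_ nA] := phiY A AB.
    by rewrite blk_b.
  have -> : 4 * F = \sum_(x in X) \sum_(y in X) (c x y + c y x).
    transitivity (\sum_(x in X) \sum_(y in X) c x y + \sum_(x in X) \sum_(y in X) c y x);
      last by rewrite -big_split; apply: eq_bigr => x _; rewrite big_split.
    rewrite [X in _ = _ + X]exchange_big /= Sb; lia.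
  rewrite -sum_neq; apply: leq_sum => x xX; apply: leq_sum => y yX.
  case: (eqVneq x y) => [<-|xy] /=.
    by rewrite /c (@eq_count _ _ pred0) ?count_pred0 // => A; rewrite eqxx.
  have t := tripcnt x y (XYs x xX) (XYs y yX) xy.
  rewrite count_map in t.
  have b := Bcnt x y xX yX xy.
  suff : count (fun A : {set T} => (x \in A) && (y \in A)) B + (c x y + c y x) <= 2.
    by rewrite b add1n ltnS.
  apply: leq_trans t.
  rewrite /c !count_sum -!big_split /= big_seq [X in _ <= X]big_seq.
  apply: leq_sum => A AB; have [_ nA] := phiY A AB.
  have xy' : (x != y) = true := xy.
  have yx' : (y != x) = true by rewrite eq_sym.
  rewrite /preim /= !in_setU1 (eq_sym x (phi A)) (eq_sym y (phi A)) ?xy' ?yx' /=.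
  apply: bool_aux.
  - by move/eqP => e; move: nA; rewrite e.
  - by move/eqP => e; move: nA; rewrite e.
  - by move/eqP => e; rewrite e.
have HG : G <= #|Y :\: X| * #|X|.
  rewrite -(leq_pmul2l (isT : 0 < 2)).
  have <- : \sum_(p in Y :\: X) \sum_(x in X) count (fun A : {set T} => (phi A == p) && (x \in A)) B = 2 * G.
    rewrite exch2 /G big_distrr /= big_seq [RHS]big_seq.
    apply: eq_bigr => A AB; have [AX cA] := BA A AB.
    by rewrite blk_c.
  have E : \sum_(p in Y :\: X) \sum_(x in X) 2 = 2 * (#|Y :\: X| * #|X|).
    under eq_bigr do rewrite sum_nat_const.
    rewrite sum_nat_const; lia.
  rewrite -E; apply: leq_sum => p pYX.
  apply: leq_sum => x xX.
  move: pYX; rewrite in_setD => /andP [pX pY].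
  have xp : x != p by apply/eqP => e; move: pX; rewrite -e xX.
  apply: leq_trans (tripcnt x p (XYs x xX) pY xp).
  rewrite count_map; apply: sub_count => A /andP [/eqP <- xA].
  by rewrite /preim /= !in_setU1 xA eqxx orbT.
have cY : #|Y :\: X| = #|Y| - #|X| by rewrite cardsD (setIidPr XY).
have vY : #|X| <= #|Y| by apply: subset_leq_card.
have key : #|X| * (#|X| - 1) <= #|X| * (4 * #|Y :\: X|) by nia.
rewrite leq_pmul2l in key; last by lia.
lia.
Qed.
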